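(* Let $n,m$ be integers with $6 \le n \le m \le 2n-1$. If $n+m \equiv 0 \pmod 3$ or $n+m \equiv 2 \pmod 3$, then \[\gamma^{\rm ID}(K_n\times K_m) = \left\lfloor \frac{2m+2n}{3}\right\rfloor.\]
   Context: For a graph $G$ and vertex $x$, $N[x]$ denotes the closed neighborhood of $x$. A set $C \subseteq V(G)$ is an identifying code (ID code) of $G$ if $C$ is a dominating set of $G$ and $N[x]\cap C \ne N[y]\cap C$ for every pair of distinct vertices $x,y$. $\gamma^{\rm ID}(G)$ is the minimum cardinality of an ID code of $G$. The direct product $G_1\times G_2$ has vertex set $V(G_1)\times V(G_2)$, with $(u_1,u_2)$ adjacent to $(v_1,v_2)$ iff $u_1v_1\in E(G_1)$ and $u_2v_2 \in E(G_2)$. $K_n$ is the complete graph on vertex set $[n]=\{1,\dots,n\}$; thus in $K_n\times K_m$ two vertices are adjacent iff they differ in both coordinates. *)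

(* Defs.v *)
From mathcomp Require Import all_boot.
Set Implicit Arguments. Unset Strict Implicit. Unset Printing Implicit Defensive.

Definition cnbhd (T : finType) (e : rel T) (x : T) : {set T} :=
  [set y | (y == x) || e x y].

Definition dominating (T : finType) (e : rel T) (C : {set T}) : bool :=
  [forall x, cnbhd e x :&: C != set0].

Definition id_code (T : finType) (e : rel T) (C : {set T}) : bool :=
  dominating e C &&
  [forall x, forall y, (x != y) ==> (cnbhd e x :&: C != cnbhd e y :&: C)].

Definition gammaID_is (T : finType) (e : rel T) (k : nat) : Prop :=
  (exists C : {set T}, id_code e C /\ #|C| = k) /\
  (forall C : {set T}, id_code e C -> k <= #|C|).

Definition Kn_rel (n : nat) : rel 'I_n := fun u v => u != v.

Definition dprod_rel (T1 T2 : finType) (e1 : rel T1) (e2 : rel T2)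
  : rel (T1 * T2) := fun u v => e1 u.1 v.1 && e2 u.2 v.2.

Definition KnxKm (n m : nat) : rel ('I_n * 'I_m) :=
  dprod_rel (@Kn_rel n) (@Kn_rel m).
Arguments KnxKm : clear implicits.

(* Main.v *)
Require Import Defs.
From mathcomp Require Import all_boot zify.
Set Implicit Arguments. Unset Strict Implicit. Unset Printing Implicit Defensive.

Definition rdeg n m (C : {set 'I_n * 'I_m}) (i : 'I_n) := #|[set x in C | x.1 == i]|.
Definition cdeg n m (C : {set 'I_n * 'I_m}) (j : 'I_m) := #|[set x in C | x.2 == j]|.

Lemma rdeg_sum n m (C : {set 'I_n * 'I_m}) (F : 'I_n -> nat) :
  \sum_i rdeg C i * F i = \sum_(x in C) F x.1.
Proof.
rewrite (partition_big (fun x => x.1) xpredT) //=.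
apply: eq_bigr => i _. rewrite /rdeg -sum1_card big_distrl /=.
apply: eq_big => [x|x]; first by rewrite inE.
by rewrite inE => /andP[_ /eqP->]; rewrite mul1n.
Qed.

Lemma cdeg_sum n m (C : {set 'I_n * 'I_m}) (F : 'I_m -> nat) :
  \sum_j cdeg C j * F j = \sum_(x in C) F x.2.
Proof.
rewrite (partition_big (fun x => x.2) xpredT) //=.
apply: eq_bigr => i _. rewrite /cdeg -sum1_card big_distrl /=.
apply: eq_big => [x|x]; first by rewrite inE.
by rewrite inE => /andP[_ /eqP->]; rewrite mul1n.
Qed.

Lemma sum_ind (T : finType) (A : {set T}) (P : pred T) :
  \sum_(x in A) (P x : nat) = #|[set x in A | P x]|.
Proof.
rewrite -sum1_card [RHS]big_mkcond [LHS]big_mkcond /=.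
by apply: eq_bigr => x _; rewrite !inE; case: (x \in A); case: (P x).
Qed.

Lemma sum_indT (T : finType) (P : pred T) :
  \sum_x (P x : nat) = #|[set x | P x]|.
Proof.
rewrite -sum1_card [RHS]big_mkcond /=.
by apply: eq_bigr => x _; rewrite !inE; case: (P x).
Qed.

Lemma rdeg_pos n m (C : {set 'I_n * 'I_m}) x : x \in C -> 1 <= rdeg C x.1.
Proof. move=> xC; apply/card_gt0P; exists x; by rewrite inE xC eqxx. Qed.
Lemma cdeg_pos n m (C : {set 'I_n * 'I_m}) x : x \in C -> 1 <= cdeg C x.2.
Proof. move=> xC; apply/card_gt0P; exists x; by rewrite inE xC eqxx. Qed.

Lemma rdeg0 n m (C : {set 'I_n * 'I_m}) i x : rdeg C i = 0 -> x \in C -> x.1 != i.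
Proof.
move=> /cards0_eq H xC; apply/negP => /eqP E.
have : x \in [set x in C | x.1 == i] by rewrite inE xC E eqxx.
by rewrite H inE.
Qed.
Lemma cdeg0 n m (C : {set 'I_n * 'I_m}) j x : cdeg C j = 0 -> x \in C -> x.2 != j.
Proof.
move=> /cards0_eq H xC; apply/negP => /eqP E.
have : x \in [set x in C | x.2 == j] by rewrite inE xC E eqxx.
by rewrite H inE.
Qed.

Lemma rdeg1 n m (C : {set 'I_n * 'I_m}) x y : rdeg C x.1 = 1 -> x \in C -> y \in C -> y.1 = x.1 -> y = x.
Proof.
move=> H xC yC E.
have /card_le1_eqP P : #|[set z in C | z.1 == x.1]| <= 1 by rewrite -/(rdeg C x.1) H.
by apply: P; rewrite inE ?yC ?xC ?E eqxx.
Qed.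
Lemma cdeg1 n m (C : {set 'I_n * 'I_m}) x y : cdeg C x.2 = 1 -> x \in C -> y \in C -> y.2 = x.2 -> y = x.
Proof.
move=> H xC yC E.
have /card_le1_eqP P : #|[set z in C | z.2 == x.2]| <= 1 by rewrite -/(cdeg C x.2) H.
by apply: P; rewrite inE ?yC ?xC ?E eqxx.
Qed.

Lemma closed_notid n m (C : {set 'I_n * 'I_m}) (i i' : 'I_n) (j j' : 'I_m) :
  i != i' -> j != j' ->
  (forall x, x \in C -> (x.1 == i) || (x.1 == i') || (x.2 == j) || (x.2 == j') ->
     ((x.1 == i) || (x.1 == i')) && ((x.2 == j) || (x.2 == j'))) ->
  id_code (KnxKm n m) C -> False.
Proof.
move=> ii jj Hcl /andP[_ /forallP H].
move: (H (i,j)) => /forallP /(_ (i',j')).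
rewrite xpair_eqE (negbTE ii) /= => /negP; apply.
apply/eqP/setP => [[a b]]; rewrite !inE /KnxKm /dprod_rel /Kn_rel /= !xpair_eqE.
case Hab: ((a,b) \in C); last by rewrite !andbF.
move: (Hcl _ Hab) => /=; rewrite !andbT.
move: ii jj; rewrite -!val_eqE /=. lia.
Qed.

Lemma id_neq (T : finType) (e : rel T) (C : {set T}) x y :
  id_code e C -> x != y -> cnbhd e x :&: C != cnbhd e y :&: C.
Proof. by move=> /andP[_ /forallP H] xy; move: (H x) => /forallP /(_ y) /implyP; apply. Qed.

Lemma zr_le1 n m (C : {set 'I_n * 'I_m}) : 0 < m -> id_code (KnxKm n m) C ->
  #|[set i | rdeg C i == 0]| <= 1.
Proof.
move=> m0 Hid; rewrite leqNgt; apply/negP => /card_gt1P [i [i' [hi hi' ii]]].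
move: hi hi'; rewrite !inE => /eqP hi /eqP hi'.
have Hne : (i, Ordinal m0) != (i', Ordinal m0) by rewrite xpair_eqE negb_and ii.
move: (id_neq Hid Hne) => /negP; apply.
apply/eqP/setP => [[a b]]; rewrite !inE /KnxKm /dprod_rel /Kn_rel /= !xpair_eqE.
case Hab: ((a,b) \in C); last by rewrite !andbF.
have := rdeg0 hi Hab; have := rdeg0 hi' Hab => /=.
rewrite -!val_eqE /=. lia.
Qed.

Lemma zc_le1 n m (C : {set 'I_n * 'I_m}) : 0 < n -> id_code (KnxKm n m) C ->
  #|[set j | cdeg C j == 0]| <= 1.
Proof.
move=> n0 Hid; rewrite leqNgt; apply/negP => /card_gt1P [i [i' [hi hi' ii]]].
move: hi hi'; rewrite !inE => /eqP hi /eqP hi'.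
have Hne : (Ordinal n0, i) != (Ordinal n0, i') by rewrite xpair_eqE negb_and ii orbT.
move: (id_neq Hid Hne) => /negP; apply.
apply/eqP/setP => [[a b]]; rewrite !inE /KnxKm /dprod_rel /Kn_rel /= !xpair_eqE.
case Hab: ((a,b) \in C); last by rewrite !andbF.
have := cdeg0 hi Hab; have := cdeg0 hi' Hab => /=.
rewrite -!val_eqE /=. lia.
Qed.

Lemma ll_le1 n m (C : {set 'I_n * 'I_m}) : id_code (KnxKm n m) C ->
  #|[set x in C | (rdeg C x.1 == 1) && (cdeg C x.2 == 1)]| <= 1.
Proof.
move=> Hid; rewrite leqNgt; apply/negP => /card_gt1P [x [y [hx hy xy]]].
move: hx hy; rewrite !inE => /and3P[xC /eqP rx /eqP cx] /and3P[yC /eqP ry /eqP cy].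
have d1 : x.1 != y.1.
  by apply/negP => /eqP E; move: xy; rewrite (rdeg1 rx xC yC (esym E)) eqxx.
have d2 : x.2 != y.2.
  by apply/negP => /eqP E; move: xy; rewrite (cdeg1 cx xC yC (esym E)) eqxx.
apply: (closed_notid d1 d2 _ Hid) => z zC.
case/orP => [/orP[/orP[|]|]|] /eqP E.
- by rewrite (rdeg1 rx xC zC E) !eqxx.
- by rewrite (rdeg1 ry yC zC E) !eqxx !orbT.
- by rewrite (cdeg1 cx xC zC E) !eqxx.
- by rewrite (cdeg1 cy yC zC E) !eqxx !orbT.
Qed.

Lemma zzl_false n m (C : {set 'I_n * 'I_m}) : id_code (KnxKm n m) C ->
  0 < #|[set i | rdeg C i == 0]| -> 0 < #|[set j | cdeg C j == 0]| ->
  0 < #|[set x in C | (rdeg C x.1 == 1) && (cdeg C x.2 == 1)]| -> False.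
Proof.
move=> Hid /card_gt0P [i0 hi] /card_gt0P [j0 hj] /card_gt0P [x hx].
move: hi hj hx; rewrite !inE => /eqP r0 /eqP c0 /and3P[xC /eqP rx /eqP cx].
have d1 : i0 != x.1 by rewrite eq_sym; apply: rdeg0 r0 xC.
have d2 : j0 != x.2 by rewrite eq_sym; apply: cdeg0 c0 xC.
apply: (closed_notid d1 d2 _ Hid) => z zC.
case/orP => [/orP[/orP[|]|]|].
- by move: (rdeg0 r0 zC) => /negbTE->.
- by move=> /eqP E; rewrite (rdeg1 rx xC zC E) !eqxx !orbT.
- by move: (cdeg0 c0 zC) => /negbTE->.
- by move=> /eqP E; rewrite (cdeg1 cx xC zC E) !eqxx !orbT.
Qed.

Lemma h2r_le n m (C : {set 'I_n * 'I_m}) : id_code (KnxKm n m) C ->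
  0 < #|[set i | rdeg C i == 0]| ->
  #|[set i | rdeg C i == 2]| <= #|[set x in C | (2 <= rdeg C x.1) && (2 <= cdeg C x.2)]|.
Proof.
move=> Hid /card_gt0P [i0]; rewrite inE => /eqP r0.
apply: leq_trans (leq_imset_card (fun x => x.1) _).
apply: subset_leq_card; apply/subsetP => i; rewrite inE => /eqP r2.
have /cards2P [x [y [xy E]]] : #|[set z in C | z.1 == i]| == 2 by rewrite -/(rdeg C i) r2.
have hx : x \in [set z in C | z.1 == i] by rewrite E !inE eqxx.
have hy : y \in [set z in C | z.1 == i] by rewrite E !inE eqxx orbT.
move: hx hy; rewrite !inE => /andP[xC /eqP x1] /andP[yC /eqP y1].
have rx : rdeg C x.1 = 2 by rewrite x1.
have ry : rdeg C y.1 = 2 by rewrite y1.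
case cxh: (2 <= cdeg C x.2).
  by apply/imsetP; exists x; rewrite // inE xC rx cxh.
case cyh: (2 <= cdeg C y.2).
  by apply/imsetP; exists y; rewrite // inE yC ry cyh.
exfalso.
have cx : cdeg C x.2 = 1 by have := cdeg_pos xC; move: cxh; lia.
have cy : cdeg C y.2 = 1 by have := cdeg_pos yC; move: cyh; lia.
have d1 : i0 != i by apply/negP => /eqP E0; move: r0; rewrite E0 r2.
have d2 : x.2 != y.2.
  apply/negP => /eqP E2; move: xy; rewrite (cdeg1 cx xC yC (esym E2)) eqxx //.
apply: (closed_notid d1 d2 _ Hid) => z zC.
case/orP => [/orP[/orP[|]|]|].
- by move: (rdeg0 r0 zC) => /negbTE->.
- move=> zi.
  have : z \in [set z in C | z.1 == i] by rewrite inE zC zi.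
  by rewrite E !inE => /orP[]/eqP->; rewrite ?x1 ?y1 !eqxx ?orbT.
- by move=> /eqP E2; rewrite (cdeg1 cx xC zC E2) x1 !eqxx !orbT.
- by move=> /eqP E2; rewrite (cdeg1 cy yC zC E2) y1 !eqxx !orbT.
Qed.

Lemma h2c_le n m (C : {set 'I_n * 'I_m}) : id_code (KnxKm n m) C ->
  0 < #|[set j | cdeg C j == 0]| ->
  #|[set j | cdeg C j == 2]| <= #|[set x in C | (2 <= rdeg C x.1) && (2 <= cdeg C x.2)]|.
Proof.
move=> Hid /card_gt0P [j0]; rewrite inE => /eqP c0.
apply: leq_trans (leq_imset_card (fun x => x.2) _).
apply: subset_leq_card; apply/subsetP => i; rewrite inE => /eqP r2.
have /cards2P [x [y [xy E]]] : #|[set z in C | z.2 == i]| == 2 by rewrite -/(cdeg C i) r2.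
have hx : x \in [set z in C | z.2 == i] by rewrite E !inE eqxx.
have hy : y \in [set z in C | z.2 == i] by rewrite E !inE eqxx orbT.
move: hx hy; rewrite !inE => /andP[xC /eqP x1] /andP[yC /eqP y1].
have rx : cdeg C x.2 = 2 by rewrite x1.
have ry : cdeg C y.2 = 2 by rewrite y1.
case cxh: (2 <= rdeg C x.1).
  by apply/imsetP; exists x; rewrite // inE xC rx cxh.
case cyh: (2 <= rdeg C y.1).
  by apply/imsetP; exists y; rewrite // inE yC ry cyh.
exfalso.
have cx : rdeg C x.1 = 1 by have := rdeg_pos xC; move: cxh; lia.
have cy : rdeg C y.1 = 1 by have := rdeg_pos yC; move: cyh; lia.
have d2 : j0 != i by apply/negP => /eqP E0; move: c0; rewrite E0 r2.
have d1 : x.1 != y.1.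
  apply/negP => /eqP E2; move: xy; rewrite (rdeg1 cx xC yC (esym E2)) eqxx //.
apply: (closed_notid d1 d2 _ Hid) => z zC.
case/orP => [/orP[/orP[|]|]|].
- by move=> /eqP E2; rewrite (rdeg1 cx xC zC E2) x1 !eqxx !orbT.
- by move=> /eqP E2; rewrite (rdeg1 cy yC zC E2) y1 !eqxx !orbT.
- by move: (cdeg0 c0 zC) => /negbTE->.
- move=> zi.
  have : z \in [set z in C | z.2 == i] by rewrite inE zC zi.
  by rewrite E !inE => /orP[]/eqP->; rewrite ?x1 ?y1 !eqxx ?orbT.
Qed.

Lemma lower n m (C : {set 'I_n * 'I_m}) : id_code (KnxKm n m) C ->
  6 <= n -> n <= m -> m <= 2 * n - 1 -> 2 * (n + m) <= 3 * #|C| + 2.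
Proof.
move=> Hid n6 nm m2n.
set R := rdeg C. set K := cdeg C.
have En : n = \sum_(i : 'I_n) ((R i == 0) + (R i == 1) + (R i == 2) + (3 <= R i)).
  rewrite -{1}(card_ord n) -sum1_card; apply: eq_bigr => i _; lia.
have Em : m = \sum_(j : 'I_m) ((K j == 0) + (K j == 1) + (K j == 2) + (3 <= K j)).
  rewrite -{1}(card_ord m) -sum1_card; apply: eq_bigr => i _; lia.
rewrite !big_split /= !sum_indT in En Em.
have Ek : #|C| = \sum_(x in C) ((R x.1 == 1) && (K x.2 == 1) : nat) +
   \sum_(x in C) ((R x.1 == 1) && (2 <= K x.2) : nat) +
   \sum_(x in C) ((2 <= R x.1) && (K x.2 == 1) : nat) +
   \sum_(x in C) ((2 <= R x.1) && (2 <= K x.2) : nat).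
  rewrite -!big_split -sum1_card; apply: eq_bigr => x xC /=.
  have := rdeg_pos xC; have := cdeg_pos xC; rewrite -/R -/K; simpl. lia.
have ELr : \sum_i (R i == 1 : nat) = \sum_(x in C) ((R x.1 == 1) && (K x.2 == 1) : nat) +
   \sum_(x in C) ((R x.1 == 1) && (2 <= K x.2) : nat).
  rewrite -big_split /=.
  transitivity (\sum_i R i * (R i == 1)); first by apply: eq_bigr => i _; case: (_ i) => [|[|r]] //=; lia.
  rewrite rdeg_sum; apply: eq_bigr => x xC /=.
  have := cdeg_pos xC; rewrite -/K; simpl; lia.
have ELc : \sum_j (K j == 1 : nat) = \sum_(x in C) ((R x.1 == 1) && (K x.2 == 1) : nat) +
   \sum_(x in C) ((2 <= R x.1) && (K x.2 == 1) : nat).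
  rewrite -big_split /=.
  transitivity (\sum_j K j * (K j == 1)); first by apply: eq_bigr => i _; case: (_ i) => [|[|r]] //=; lia.
  rewrite cdeg_sum; apply: eq_bigr => x xC /=.
  have := rdeg_pos xC; rewrite -/R; simpl; lia.
have ESR : 2 * \sum_i (R i == 2 : nat) + 3 * \sum_i (3 <= R i : nat) <=
   \sum_(x in C) ((2 <= R x.1) && (K x.2 == 1) : nat) +
   \sum_(x in C) ((2 <= R x.1) && (2 <= K x.2) : nat).
  rewrite -big_split /= !big_distrr -big_split /=.
  apply: (@leq_trans (\sum_i R i * (2 <= R i))).
    apply: leq_sum => i _; case: (R i) => [|[|[|r]]] //=; lia.
  rewrite rdeg_sum leq_eqVlt; apply/orP; left; apply/eqP; apply: eq_bigr => x xC /=.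
  have := cdeg_pos xC; rewrite -/K; simpl; lia.
have ESC : 2 * \sum_j (K j == 2 : nat) + 3 * \sum_j (3 <= K j : nat) <=
   \sum_(x in C) ((R x.1 == 1) && (2 <= K x.2) : nat) +
   \sum_(x in C) ((2 <= R x.1) && (2 <= K x.2) : nat).
  rewrite -big_split /= !big_distrr -big_split /=.
  apply: (@leq_trans (\sum_j K j * (2 <= K j))).
    apply: leq_sum => i _; case: (K i) => [|[|[|r]]] //=; lia.
  rewrite cdeg_sum leq_eqVlt; apply/orP; left; apply/eqP; apply: eq_bigr => x xC /=.
  have := rdeg_pos xC; rewrite -/R; simpl; lia.
rewrite !sum_ind !sum_indT in Ek ELr ELc ESR ESC.
have F1 := zr_le1 (leq_trans (isT : 0 < 6) (leq_trans n6 nm)) Hid.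
have F2 := zc_le1 (leq_trans (isT : 0 < 6) n6) Hid.
have F3 := ll_le1 Hid.
have F4 := zzl_false Hid.
have F5 := h2r_le Hid.
have F6 := h2c_le Hid.
rewrite -/R -/K in F1 F2 F3 F4 F5 F6.
lia.
Qed.

Lemma eq_closed n m (C : {set 'I_n * 'I_m}) (i i' : 'I_n) (j j' : 'I_m) :
  i != i' -> j != j' ->
  cnbhd (KnxKm n m) (i,j) :&: C = cnbhd (KnxKm n m) (i',j') :&: C ->
  forall x, x \in C -> (x.1 == i) || (x.1 == i') || (x.2 == j) || (x.2 == j') ->
     ((x.1 == i) || (x.1 == i')) && ((x.2 == j) || (x.2 == j')).
Proof.
move=> ii jj E [a b] H.
have := congr1 (fun S : {set _} => (a,b) \in S) E; rewrite !inE /KnxKm /dprod_rel /Kn_rel /= !xpair_eqE H /= !andbT.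
move: ii jj; rewrite -!val_eqE /=. lia.
Qed.

Lemma label_id n m (f : 'I_n -> nat) (g : 'I_m -> nat) :
  (forall r, exists c, f r = g c) ->
  (forall c, exists r, f r = g c) ->
  (forall r r' c c', r != r' -> c != c' -> f r = f r' -> g c = g c' -> f r = g c -> False) ->
  (forall r r' c c', r != r' -> c != c' -> f r = g c -> f r' = g c' -> f r != f r' ->
     (exists r'', [/\ r'' != r, r'' != r' & (f r'' = f r \/ f r'' = f r')]) \/
     (exists c'', [/\ c'' != c, c'' != c' & (g c'' = f r \/ g c'' = f r')])) ->
  (forall r c, exists r' c', [/\ f r' = g c', f r' != f r & f r' != g c]) ->
  id_code (KnxKm n m) [set x | f x.1 == g x.2].
Proof.
move=> H1r H1c H2 H3 H4.
set C := [set x | f x.1 == g x.2].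
have inC x : (x \in C) = (f x.1 == g x.2) by rewrite inE.
apply/andP; split.
  apply/forallP => -[i j]; have [r' [c' [E1 E2 E3]]] := H4 i j.
  apply/set0Pn; exists (r', c'); rewrite !inE /KnxKm /dprod_rel /Kn_rel /= E1 eqxx andbT.
  apply/orP; right; apply/andP; split.
    by apply/negP => /eqP Ei; move: E2; rewrite Ei eqxx.
  by apply/negP => /eqP Ej; move: E3; rewrite E1 Ej eqxx.
apply/forallP => -[i j]; apply/forallP => -[i' j']; apply/implyP => Hne.
apply/negP => /eqP E.
have mem z : z \in C -> (z \in cnbhd (KnxKm n m) (i,j)) = (z \in cnbhd (KnxKm n m) (i',j')).
  move=> zC; have := congr1 (fun S : {set _} => z \in S) E; by rewrite !in_setI zC !andbT.
case: (eqVneq i i') => [ii|ii].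
  subst i'; have jj : j != j' by move: Hne; rewrite xpair_eqE eqxx.
  have [r Er] := H1c j.
  have := mem (r, j); rewrite inC Er eqxx => /(_ isT).
  rewrite !inE /KnxKm /dprod_rel /Kn_rel /= !xpair_eqE.
  move: jj; rewrite -!val_eqE /=; lia.
case: (eqVneq j j') => [jj|jj].
  subst j'.
  have [c Ec] := H1r i.
  have := mem (i, c); rewrite inC Ec eqxx => /(_ isT).
  rewrite !inE /KnxKm /dprod_rel /Kn_rel /= !xpair_eqE.
  move: ii; rewrite -!val_eqE /=; lia.
have Hcl := eq_closed ii jj E.
have Hrow r c : f r = g c -> (r == i) || (r == i') -> (c == j) || (c == j').
  move=> Erc Hr; have := Hcl (r, c); rewrite inC Erc eqxx /= Hr => /(_ isT isT).
  by case/andP.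
have Hcol r c : f r = g c -> (c == j) || (c == j') -> (r == i) || (r == i').
  move=> Erc Hc; have := Hcl (r, c); rewrite inC Erc eqxx /= => /(_ isT).
  have -> : (r == i) || (r == i') || (c == j) || (c == j') by rewrite -orbA Hc orbT.
  by move=> /(_ isT) /andP[].
have [ci Eci] := H1r i. have [ci' Eci'] := H1r i'.
have [rj Erj] := H1c j. have [rj' Erj'] := H1c j'.
have hci := Hrow _ _ Eci (introT orP (or_introl (eqxx i))).
have hci' := Hrow _ _ Eci' (introT orP (or_intror (eqxx i'))).
have hrj := Hcol _ _ Erj (introT orP (or_introl (eqxx j))).
have hrj' := Hcol _ _ Erj' (introT orP (or_intror (eqxx j'))).
case: (eqVneq (f i) (f i')) => [fii|fii].
  have gj : g j = f i by move: hrj; rewrite -Erj; case/orP => /eqP ->.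
  have gj' : g j' = f i by move: hrj'; rewrite -Erj'; case/orP => /eqP ->.
  by apply: (H2 _ _ _ _ ii jj fii (etrans gj (esym gj')) (esym gj)).
have cc : ci != ci'.
  by apply/negP => /eqP Ec; move: fii; rewrite Eci Eci' Ec eqxx.
case: (H3 _ _ _ _ ii cc Eci Eci' fii) => [[r'' [r1 r2 [Er|Er]]]|[c'' [c1 c2 [Ec|Ec]]]].
- have := Hcol _ _ (etrans Er Eci) hci.
  by move: r1 r2; rewrite -!val_eqE /=; lia.
- have := Hcol _ _ (etrans Er Eci') hci'.
  by move: r1 r2; rewrite -!val_eqE /=; lia.
- have := Hrow _ _ (esym Ec) (introT orP (or_introl (eqxx i))).
  by move: c1 c2 cc hci hci' jj; rewrite -!val_eqE /=; lia.
- have := Hrow _ _ (esym Ec) (introT orP (or_intror (eqxx i'))).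
  by move: c1 c2 cc hci hci' jj; rewrite -!val_eqE /=; lia.
Qed.

Definition fl (a b r : nat) := if r < a + b then r else r - b.
Definition gl (a c : nat) := if c < a then c else c - a.

Ltac split_ifs := unfold fl, gl in *; repeat match goal with
 | H : context [if ?b then _ else _] |- _ => let E := fresh "E" in destruct b eqn:E
 | |- context [if ?b then _ else _] => let E := fresh "E" in destruct b eqn:E
 end.


Lemma fl_lt a b e r : r < a + 2 * b + e -> fl a b r < a + b + e.
Proof. move=> h; split_ifs; lia. Qed.
Lemma gl_lt a b e c : c < 2 * a + b + e -> gl a c < a + b + e.
Proof. move=> h; split_ifs; lia. Qed.

Lemma row_ex n a b e l : n = a + 2 * b + e -> l < a + b + e -> exists r : 'I_n, fl a b r = l.
Proof.
move=> hn hl.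
have h : (if l < a + b then l else l + b) < n by split_ifs; lia.
exists (Ordinal h) => /=; split_ifs; lia.
Qed.

Lemma col_ex m a b e l : m = 2 * a + b + e -> l < a + b + e -> exists c : 'I_m, gl a c = l.
Proof.
move=> hm hl.
have h : (if l < a then l else l + a) < m by split_ifs; lia.
exists (Ordinal h) => /=; split_ifs; lia.
Qed.

Lemma row_extra n a b e l (r0 : 'I_n) : n = a + 2 * b + e -> a <= l < a + b ->
  exists r : 'I_n, r != r0 /\ fl a b r = l.
Proof.
move=> hn hl.
have h : (if val r0 == l then l + b else l) < n by split_ifs; lia.
exists (Ordinal h); rewrite -val_eqE /=; split; split_ifs; lia.
Qed.

Lemma col_extra m a b e l (c0 : 'I_m) : m = 2 * a + b + e -> l < a ->
  exists c : 'I_m, c != c0 /\ gl a c = l.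
Proof.
move=> hm hl.
have h : (if val c0 == l then l + a else l) < m by split_ifs; lia.
exists (Ordinal h); rewrite -val_eqE /=; split; split_ifs; lia.
Qed.

Definition rowl (a b l : nat) := if l < a + b then l else l + b.

Lemma three u v : exists l, [/\ l < 3, l != u & l != v].
Proof.
case: (boolP ((u != 0) && (v != 0))) => H; first by exists 0; split; lia.
case: (boolP ((u != 1) && (v != 1))) => H'; first by exists 1; split; lia.
by exists 2; split; lia.
Qed.

Lemma sum_interval N lo hi :
  \sum_(i < N) ((lo <= i) && (i < hi) : nat) = minn N hi - minn N lo.
Proof.
elim: N => [|N IH]; first by rewrite big_ord0; lia.
rewrite big_ord_recr /= IH; lia.
Qed.

Lemma construct n m a b e : n = a + 2 * b + e -> m = 2 * a + b + e -> e <= 1 -> 3 <= a + b ->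
  id_code (KnxKm n m) [set x : 'I_n * 'I_m | fl a b x.1 == gl a x.2] /\
  #|[set x : 'I_n * 'I_m | fl a b x.1 == gl a x.2]| <= m + b.
Proof.
move=> hn hm he hab; split.
  apply: (label_id (f := fun r : 'I_n => fl a b r) (g := fun c : 'I_m => gl a c)).
  - move=> r; have hl : fl a b r < a + b + e by apply: fl_lt; rewrite -hn ltn_ord.
    have [c Ec] := col_ex hm hl; by exists c.
  - move=> c; have hl : gl a c < a + b + e by apply: gl_lt; rewrite -hm ltn_ord.
    have [r Er] := row_ex hn hl; by exists r.
  - move=> r r' c c'; rewrite -!val_eqE /= => rr cc.
    have := ltn_ord r; have := ltn_ord r'; have := ltn_ord c; have := ltn_ord c'.
    move: rr cc; split_ifs; lia.
  - move=> r r' c c' rr cc E1 E2 ne.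
    have l1 : fl a b r < a + b + e by apply: fl_lt; rewrite -hn ltn_ord.
    have l2 : fl a b r' < a + b + e by apply: fl_lt; rewrite -hn ltn_ord.
    case: (ltnP (fl a b r) a) => h1.
      right; have [c'' [c1 c2]] := col_extra c hm h1; exists c''; split => //; last by left.
      by apply/negP => /eqP Ec; move: ne; rewrite E2 -Ec c2 eqxx.
    case: (ltnP (fl a b r) (a + b)) => h2.
      left; have [r'' [c1 c2]] := row_extra r hn (introT andP (conj h1 h2)).
      exists r''; split => //; last by left.
      by apply/negP => /eqP Ec; move: ne; rewrite -Ec c2 eqxx.
    case: (ltnP (fl a b r') a) => h3.
      right; have [c'' [c1 c2]] := col_extra c' hm h3; exists c''; split => //; last by right.
      by apply/negP => /eqP Ec; move: ne; rewrite E1 -Ec c2 eqxx.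
    have h4 : fl a b r' < a + b by move: ne; lia.
    left; have [r'' [c1 c2]] := row_extra r' hn (introT andP (conj h3 h4)).
    exists r''; split => //; last by right.
    by apply/negP => /eqP Ec; move: ne; rewrite -Ec c2 eqxx.
  - move=> r c; have [l [l3 lu lv]] := three (fl a b r) (gl a c).
    have hl : l < a + b + e by lia.
    have [r' Er] := row_ex hn hl; have [c' Ec] := col_ex hm hl.
    by exists r', c'; rewrite Er Ec.
set C := [set x : 'I_n * 'I_m | fl a b x.1 == gl a x.2].
set P := fun x : 'I_n * 'I_m => val x.1 == rowl a b (gl a x.2).
have EC : #|C| = #|[set x in C | P x]| + #|[set x in C | ~~ P x]|.
  rewrite -!sum_ind -sum1_card -big_split /=; apply: eq_bigr => x _; by case: (P x).
have A1 : #|[set x in C | P x]| <= m.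
  rewrite -(card_in_imset (f := fun x => x.2)).
    by apply: leq_trans (max_card _) _; rewrite card_ord.
  move=> [x1 x2] [y1 y2]; rewrite !inE /P /= => /andP[_ /eqP hx] /andP[_ /eqP hy] E.
  subst y2; congr pair; apply: val_inj; rewrite /= hx hy //.
have A2 : #|[set x in C | ~~ P x]| <= b.
  rewrite -(card_in_imset (f := fun x => x.1)).
    apply: (@leq_trans #|[set r : 'I_n | (a + b <= r) && (r < a + 2 * b)]|).
      apply: subset_leq_card; apply/subsetP => r /imsetP [[x1 x2]].
      rewrite !inE /P /= => /andP[hx1 hx2] ->.
      have := ltn_ord x1; have := ltn_ord x2.
      move: hx1 hx2; unfold rowl; split_ifs; lia.
    rewrite -sum_indT sum_interval; lia.
  move=> [x1 x2] [y1 y2]; rewrite !inE /P /= => /andP[hx1 hx2] /andP[hy1 hy2] E.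
  subst y1; congr pair; apply: val_inj.
  have := ltn_ord x1; have := ltn_ord x2; have := ltn_ord y2.
  move: hx1 hx2 hy1 hy2; unfold rowl; rewrite /=; split_ifs; lia.
lia.
Qed.

Lemma arith_fin n m a b e s : (2 * m + 2 * n) %/ 3 = m + b -> ((n + m) %% 3 = 0 \/ (n + m) %% 3 = 2) -> n = a + 2 * b + e -> m = 2 * a + b + e -> e <= 1 -> 2 * (n + m) <= 3 * s + 2 -> s <= m + b -> s = (2 * m + 2 * n) %/ 3.
Proof.
move=> hk hmod hn hm he hl hc.
have h3 : 3 * ((2 * m + 2 * n) %/ 3) + 1 >= 2 * (n + m) by lia.
lia.
Qed.

Lemma arith2 n m s : ((n + m) %% 3 = 0 \/ (n + m) %% 3 = 2) -> 2 * (n + m) <= 3 * s + 2 -> (2 * m + 2 * n) %/ 3 <= s.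
Proof.
move=> hmod hl.
have h3 : 3 * ((2 * m + 2 * n) %/ 3) + 1 >= 2 * (n + m) by lia.
lia.
Qed.

Theorem theorem3 (n m : nat) :
  6 <= n -> n <= m -> m <= 2 * n - 1 ->
  ((n + m) %% 3 = 0 \/ (n + m) %% 3 = 2) ->
  gammaID_is (KnxKm n m) ((2 * m + 2 * n) %/ 3).
Proof.
move=> n6 nm m2n hmod.
have [a [b [e [hn hm he hab hk]]]] : exists a b e,
    [/\ n = a + 2 * b + e, m = 2 * a + b + e, e <= 1, 3 <= a + b &
        (2 * m + 2 * n) %/ 3 = m + b].
  case: hmod => h.
    by exists ((2 * m - n) %/ 3), ((2 * n - m) %/ 3), 0; split; lia.
  by exists ((2 * m - n - 1) %/ 3), ((2 * n - m - 1) %/ 3), 1; split; lia.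
have [Hid Hcard] := construct hn hm he hab.
have hl := lower Hid n6 nm m2n.
split.
  exists [set x : 'I_n * 'I_m | fl a b x.1 == gl a x.2]; split; [exact: Hid | idtac].
  exact: (arith_fin hk hmod hn hm he hl Hcard).
move=> C' HC'; exact: (arith2 hmod (lower HC' n6 nm m2n)).
Qed.
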